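(* For all integers $i\ge0$, $j\ge0$, $n\ge0$ and $k\ge1$, $$\sum_{\substack{C\in\mathcal R_{\rm dec}:\ \|C\|=i+1,\ d_{j+1}=1\\ \nu_{j+1}(C)=n,\ b(C)=j+1}}\hat a_C\,\omega_{\hat C}\;=\;\sum_{\substack{C\in\mathcal R_{\rm dec}:\ \|C\|=i+k,\ d_{j+1}=k\\ \nu_{j+1}(C)=n,\ b(C)=j+1}}\hat a_C\,\omega_{\hat C}.$$
   Context: Fix a commutative $\mathbb Q$-algebra $A$, an integer $s$, and elements $a_{k,i}\in A$ ($k\ge1$, $i\ge0$). For $y$ and $n\ge0$, $\binom{y}{n}=y(y-1)\cdots(y-n+1)/n!$. Chord diagrams. A rooted chord diagram of size $n$ is a fixed-point-free involution $C$ of $\{1,\dots,2n\}$, viewed as $n$ chords (transpositions) $(x\,y)$ with $x<y$; the chord containing $1$ is the root chord; $|C|=n$. Chords $(x\,y),(x'\,y')$ cross if $x<x'<y<y'$ or $x'<x<y'<y$. $C$ is connected if the graph whose vertices are the chords, with edges joining crossing chords, is connected. For a set of $m$ chords with $2m$ distinct positive integer endpoints, $\mathrm{norm}$ of it is the chord diagram on $\{1,\dots,2m\}$ obtained by replacing each endpoint by its rank among the $2m$ endpoints. Intersection order. The chords of a rooted connected chord diagram of size $n$ are labeled $1,\dots,n$ recursively: the root chord gets the first available label; the remaining chords split into connected components (w.r.t. crossing); the components are processed in increasing order of their smallest endpoint, each regarded as a rooted connected chord diagram rooted at its chord with smallest endpoint and labeled recursively with the next block of consecutive labels. ''Chord $i$''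 means the chord with label $i$. Terminal and base chords. Chord $i$ is terminal if it crosses no chord $j$ with $j>i$. If $t_0<t_1<\dots<t_m$ are the terminal labels, the base chord is $b(C)=t_0$. Insertion of chord diagrams. For $C$ of size $n$ with chords $(x_1y_1),\dots,(x_ny_n)$, root $(x_1y_1)$ ($x_1=1$), $D$ of size $m$ with chords $(x'_iy'_i)$, and $1\le k\le 2m-1$, $C\circ_kD$ is the chord diagram of size $n+m$ with chords $(1,y_1+k)$, $(x_i+k,y_i+k)$ ($2\le i\le n$), $(H(x'_i),H(y'_i))$ ($1\le i\le m$), where $H(x)=x+1$ if $x\le k$ and $H(x)=x+2n$ otherwise. Root share decomposition. For rooted connected $C$ with $|C|\ge2$, let $C_1$ be the connected component (of the chords other than the root) having the smallest endpoint among such components. There is a unique $i$ with $C=C'\circ_iC''$, where $C'=\mathrm{norm}(C\setminus C_1)$, $C''=\mathrm{norm}(C_1)$. Trees. Trees are rooted plane binary trees (every non-leaf vertex has a left and a right child) with labeled leaves. For such $T,T'$ with $T'$ having $\ell$ leaves and $1\le k\le2\ell-1$: add a virtual edge above the root of $T'$, number it $1$, and number the other $2\ell-2$ edges $2,3,\dots$ in pre-order of their lower endpoints (left subtree before right). $T\circ_kT'$ is obtained by subdividing edge $k$ of $T'$ by a new vertex $v$, making the part of $T'$ below edge $k$ the right subtree of $v$ and $T$ the left subtree of $v$; leaf labels are kept. Insertion tree. If $|C|=1$, $T(C)$ is a single vertex labeled by the label of its chord; if $|C|\ge2$ with root share decomposition $C=C'\circ_iC''$, then $T(C)=T(C')\circ_iT(C'')$,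 where the leaves of $T(C'),T(C'')$ carry the intersection-order labels in $C$ of the corresponding chords. Branch-left vector. For a leaf $v$, $\nu_v$ is the number of edges in the path starting at $v$ and repeatedly moving to the parent as long as the current vertex is a right child. $\nu_i(C)$ is $\nu_v$ for the leaf $v$ of $T(C)$ labeled $i$. Decorations. A decorated chord diagram is a rooted connected chord diagram with a positive integer $d_i$ on each chord $i$; $\|C\|=\sum_id_i$; $\mathcal R_{\rm dec}$ is the set of all of them. Weight and monomial. $\omega_{\hat C}=\prod_{i\ne b(C)}\binom{sd_i+\nu_i(C)-2}{\nu_i(C)}$. With terminal labels $t_0<\dots<t_m$, $\hat a_C=\prod_{c=1}^m a_{d_{t_c},t_c-t_{c-1}}\cdot\prod_{i\text{ non-terminal}}a_{d_i,0}$. *)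

(* Defs.v *)
From HB Require Import structures.
From mathcomp Require Import all_boot all_order all_algebra all_fingroup.
Set Implicit Arguments. Unset Strict Implicit. Unset Printing Implicit Defensive.
Import Order.TTheory GRing.Theory Num.Theory.

(** * Chords.  A chord is a pair (x, y) of endpoints with x < y. *)
Definition chord := (nat * nat)%type.

Definition crossb (c c' : chord) : bool :=
  [&& c.1 < c'.1, c'.1 < c.2 & c.2 < c'.2] || [&& c'.1 < c.1, c.1 < c'.2 & c'.2 < c.2].

Fixpoint closure_iter (f : nat) (S X : seq chord) : seq chord :=
  if f is f'.+1 then closure_iter f' S [seq c <- S | (c \in X) || has (crossb c) X]
  else X.

Definition component (S : seq chord) (c : chord) : seq chord :=
  closure_iter (size S) S [:: c].

(** Chord lists are kept sorted by left endpoint; then the head of a list is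
    the chord with smallest endpoint. [comps f S] lists the connected
    components of S in increasing order of their smallest endpoint. *)
Fixpoint comps (f : nat) (S : seq chord) : seq (seq chord) :=
  if f is f'.+1 then
    (if S is c :: _ then
       let K := component S c in K :: comps f' [seq x <- S | x \notin K]
     else [::])
  else [::].

Definition connectedb (S : seq chord) : bool :=
  if S is c :: _ then all (fun x => x \in component S c) S else false.

(** Intersection order: the list of chords, chord with label l at position l-1. *)
Fixpoint iorder (f : nat) (S : seq chord) : seq chord :=
  if f is f'.+1 then
    (if S is c :: S' then c :: flatten [seq iorder f' K | K <- comps (size S') S']
     else [::])
  else [::].

Definition label (L : seq chord) (c : chord) : nat := (index c L).+1.

Definition terminals (L : seq chord) : seq nat :=
  [seq i <- iota 1 (size L) | ~~ has (crossb (nth (0, 0) L i.-1)) (drop i L)].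
Definition base (L : seq chord) : nat := head 0 (terminals L).

Definition endpoints (S : seq chord) : seq nat := flatten [seq [:: c.1; c.2] | c <- S].
Definition rank (S : seq chord) (x : nat) : nat := (count (fun y => y < x) (endpoints S)).+1.
Definition normc (S : seq chord) : seq chord := [seq (rank S c.1, rank S c.2) | c <- S].

(** Insertion C o_k D of chord diagrams (C normalised, root = head of C). *)
Definition insc (C : seq chord) (k : nat) (D : seq chord) : seq chord :=
  let n := size C in
  let H x := if x <= k then x.+1 else x + n.*2 in
  match C with
  | r :: C' => (1, r.2 + k) :: [seq (c.1 + k, c.2 + k) | c <- C'] ++ [seq (H c.1, H c.2) | c <- D]
  | [::] => [::]
  end.

Inductive tree := Leaf of nat | Node of tree & tree.

Fixpoint tsize (t : tree) : nat :=
  match t with Leaf _ => 1 | Node l r => (tsize l + tsize r).+1 end.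

(** [graft0 T k t]: subdivide the edge above the vertex of preorder index k
    (0-based) of t, with T as new left subtree. *)
Fixpoint graft0 (T : tree) (k : nat) (t : tree) {struct t} : tree :=
  match t with
  | Leaf _ => if k == 0 then Node T t else t
  | Node l r =>
      if k is k'.+1 then
        (if k' < tsize l then Node (graft0 T k' l) r else Node l (graft0 T (k' - tsize l) r))
      else Node T t
  end.

(** T o_k T' : edge k of T' (edge 1 = virtual edge above the root, others
    numbered by preorder of their lower endpoints) = edge above the vertex
    of preorder index k (1-based). *)
Definition graft (T : tree) (k : nat) (T' : tree) : tree := graft0 T k.-1 T'.

(** Branch-left values of the leaves: pairs (leaf label, nu). *)
Fixpoint nuleaves (t : tree) (acc : nat) : seq (nat * nat) :=
  match t with
  | Leaf a => [:: (a, acc)]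
  | Node l r => nuleaves l 0 ++ nuleaves r acc.+1
  end.
Definition nuv (t : tree) (i : nat) : nat :=
  head 0 [seq p.2 | p <- nuleaves t 0 & p.1 == i].

(** Insertion tree, by the root share decomposition; L is the intersection
    order of the whole diagram (used for leaf labels). *)
Fixpoint itree (f : nat) (L S : seq chord) : tree :=
  if f is f'.+1 then
    match S with
    | [:: c] => Leaf (label L c)
    | c :: S' =>
        let C1 := head [::] (comps (size S') S') in
        let S2 := [seq x <- S | x \notin C1] in
        let k := head 0 [seq k <- iota 1 (size C1).*2.-1
                          | perm_eq (normc S) (insc (normc S2) k (normc C1))] in
        graft (itree f' L S2) k (itree f' L C1)
    | [::] => Leaf 0
    end
  else Leaf 0.

(** * Chord diagrams as fixed-point-free involutions of {1..2m}
    (represented on 'I_(2m) = {0..2m-1}, shifted by one). *)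
Definition fpf_inv (m : nat) (p : {perm 'I_m}) : bool :=
  [forall x, (p (p x) == x) && (p x != x)].

Definition chords_of (m : nat) (p : {perm 'I_(m.*2)}) : seq chord :=
  [seq ((val x).+1, (val (p x)).+1) | x <- enum 'I_(m.*2) & val x < val (p x)].

Definition rcd (m : nat) (p : {perm 'I_(m.*2)}) : bool :=
  fpf_inv p && connectedb (chords_of p).

Definition diag_order (m : nat) (p : {perm 'I_(m.*2)}) : seq chord :=
  iorder (size (chords_of p)) (chords_of p).
Definition diag_tree (m : nat) (p : {perm 'I_(m.*2)}) : tree :=
  itree (size (chords_of p)) (diag_order p) (chords_of p).

Definition nu (m : nat) (p : {perm 'I_(m.*2)}) (i : nat) : nat := nuv (diag_tree p) i.

(** Decorations: d : 'I_m -> values, chord with label l gets d (l-1). *)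
Definition decs (m N : nat) (d : {ffun 'I_m -> 'I_N.+1}) : seq nat :=
  [seq val (d x) | x <- enum 'I_m].
Definition dd (ds : seq nat) (l : nat) : nat := nth 0 ds l.-1.

Definition binomr (y : rat) (n : nat) : rat :=
  ((\prod_(i < n) (y - i%:R)) / (n`!)%:R)%R.

Definition omega (s : int) (m : nat) (p : {perm 'I_(m.*2)}) (ds : seq nat) : rat :=
  let L := diag_order p in
  (\prod_(l <- iota 1 (size L) | l != base L)
     binomr ((s * (dd ds l)%:Z + (nu p l)%:Z - 2)%R%:~R) (nu p l))%R.

Definition ahat (A : comAlgType rat) (a : nat -> nat -> A) (m : nat)
  (p : {perm 'I_(m.*2)}) (ds : seq nat) : A :=
  let L := diag_order p in
  let ts := terminals L in
  ((\prod_(pr <- zip (behead ts) ts) a (dd ds pr.1) (pr.1 - pr.2)%N) *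
   (\prod_(l <- iota 1 (size L) | l \notin ts) a (dd ds l) 0%N))%R.

(** The sum over decorated diagrams C with ||C|| = N, d_{j+1} = k,
    nu_{j+1}(C) = n and b(C) = j+1.  Since every d_i >= 1, |C| <= ||C|| = N
    and each d_i <= N, so the sum is over a finite set, enumerated here. *)
Definition Ssum (A : comAlgType rat) (s : int) (a : nat -> nat -> A)
  (N j n k : nat) : A :=
  (\sum_(m < N.+1)
     \sum_(p : {perm 'I_(m.*2)} | rcd p)
       \sum_(d : {ffun 'I_m -> 'I_N.+1} |
              [&& [forall x, (0 < val (d x))%N], (\sum_x val (d x) == N)%N,
                  dd (decs d) j.+1 == k, nu p j.+1 == n & base (diag_order p) == j.+1])
         (omega s p (decs d) *: ahat a p (decs d)))%R.

(* Main.v *)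
Require Import Defs.
From HB Require Import structures.
From mathcomp Require Import all_boot all_order all_algebra all_fingroup.
From mathcomp Require Import zify.
Set Implicit Arguments. Unset Strict Implicit. Unset Printing Implicit Defensive.
Import Order.TTheory GRing.Theory Num.Theory.

Lemma sum_bij (R : nmodType) (I J : finType) (P : pred I) (Q : pred J)
  (f : J -> I) (g : I -> J) (F : I -> R) (G : J -> R) :
  (forall x, P x -> Q (g x) /\ f (g x) = x) ->
  (forall y, Q y -> P (f y) /\ g (f y) = y) ->
  (forall y, Q y -> F (f y) = G y) ->
  (\sum_(x | P x) F x = \sum_(y | Q y) G y)%R.
Proof.
move=> H1 H2 H3.
rewrite (reindex_onto f g); last by move=> x /H1 [].
apply: eq_big => [y|y /andP [Pf /eqP E]].
  apply/andP/idP => [[Pf /eqP <-]|Qy]; first by case: (H1 _ Pf).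
  by case: (H2 _ Qy) => -> ->.
case: (H1 _ Pf) => Qg _; rewrite E in Qg; by rewrite H3.
Qed.

Lemma nth_decs m N (e : {ffun 'I_m -> 'I_N.+1}) idx (h : (idx < m)%N) :
  nth 0 (decs e) idx = val (e (Ordinal h)).
Proof.
rewrite /decs (nth_map (Ordinal h)); last by rewrite size_enum_ord.
by rewrite -[X in nth _ _ X]/(nat_of_ord (Ordinal h)) nth_ord_enum.
Qed.

Lemma nth_decs0 m N (e : {ffun 'I_m -> 'I_N.+1}) idx :
  (m <= idx)%N -> nth 0 (decs e) idx = 0%N.
Proof. by move=> h; rewrite nth_default // size_map size_enum_ord. Qed.

Lemma prod_zip_eq (R : comAlgType rat) (s t : seq nat) (F G : nat -> nat -> R) :
  (forall x y, x \in s -> F x y = G x y) ->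
  (\prod_(pr <- zip s t) F pr.1 pr.2 = \prod_(pr <- zip s t) G pr.1 pr.2)%R.
Proof.
elim: s t => [|x s IH] [|y t] H //=; rewrite ?big_nil // !big_cons /=.
by rewrite H ?mem_head // IH // => x' y' hx; apply: H; rewrite inE hx orbT.
Qed.

Lemma eq_bigr_seq (R : Type) (idx : R) (op : R -> R -> R) (I : eqType)
  (r : seq I) (P : pred I) (F1 F2 : I -> R) :
  (forall i, i \in r -> P i -> F1 i = F2 i) ->
  \big[op/idx]_(i <- r | P i) F1 i = \big[op/idx]_(i <- r | P i) F2 i.
Proof.
elim: r => [|x r IH] H; rewrite ?big_nil // !big_cons.
rewrite IH; last by move=> i hi; apply: H; rewrite inE hi orbT.
by case: ifP => // Px; rewrite H ?mem_head.
Qed.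

Lemma term_indep (R : comAlgType rat) (s : int) (a : nat -> nat -> R) m
  (p : {perm 'I_(m.*2)}) j ds ds' :
  base (diag_order p) = j.+1 ->
  (forall idx, idx != j -> nth 0 ds idx = nth 0 ds' idx) ->
  omega s p ds = omega s p ds' /\ ahat a p ds = ahat a p ds'.
Proof.
move=> hb hn.
have hdd : forall l, (0 < l)%N -> l != j.+1 -> dd ds l = dd ds' l.
  move=> l l0 lj; rewrite /dd hn //; apply/eqP => e; move/eqP: lj; apply.
  by rewrite -e prednK.
split.
  rewrite /omega; apply: eq_bigr_seq => l.
  rewrite mem_iota => /andP [l0 _]; rewrite hb => hl.
  by rewrite (hdd l l0 hl).
rewrite /ahat; set L := diag_order p; set ts := terminals L.
have tspos : forall x, x \in ts -> (0 < x)%N.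
  by move=> x; rewrite mem_filter mem_iota => /and3P [_ ->].
have tsort : sorted ltn ts.
  by apply: sorted_filter; [exact: ltn_trans | exact: iota_ltn_sorted].
have hb' : head 0 ts = j.+1 by exact: hb.
congr (_ * _)%R.
  apply: (@prod_zip_eq R (behead ts) ts (fun x y => a (dd ds x) (x - y)%N)
                      (fun x y => a (dd ds' x) (x - y)%N)) => x y hx /=.
  case E : ts hx hb' tsort => [|t0 ts'] /= hx ht hs; first by rewrite in_nil in hx.
  have := order_path_min ltn_trans hs; move/allP/(_ x hx) => lt.
  rewrite hdd; [by [] | by apply: tspos; rewrite E inE hx orbT | ].
  by rewrite -ht neq_ltn lt orbT.
apply: eq_bigr_seq => l.
rewrite mem_iota => /andP [l0 _] hl.
rewrite (hdd l l0) //; apply: contra hl => /eqP ->.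
by case E : ts hb' => [|t0 ts'] /= h; [ | rewrite -h inE eqxx].
Qed.

Definition phi (j m N N' c' : nat) (d : {ffun 'I_m -> 'I_N.+1}) :
  {ffun 'I_m -> 'I_N'.+1} :=
  [ffun x => if val x == j then inord c' else inord (val (d x))].

Definition Pd (j n m N c : nat) (p : {perm 'I_(m.*2)}) (d : {ffun 'I_m -> 'I_N.+1}) : bool :=
  [&& [forall x, (0 < val (d x))%N], (\sum_x val (d x) == N)%N,
      dd (decs d) j.+1 == c, nu p j.+1 == n & base (diag_order p) == j.+1].

Lemma phi_key j n m N N' c c' (p : {perm 'I_(m.*2)}) (d : {ffun 'I_m -> 'I_N.+1}) :
  (0 < c)%N -> (0 < c')%N -> (c <= N)%N -> (c' <= N')%N -> N + c' = N' + c ->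
  Pd j n c p d ->
  [/\ Pd j n c' p (phi j N' c' d), phi j N c (phi j N' c' d) = d,
      (forall idx, idx != j -> nth 0 (decs (phi j N' c' d)) idx = nth 0 (decs d) idx)
    & (m <= N - c + 1)%N].
Proof.
move=> c0 c'0 cN c'N' eqN /and5P [/forallP pos /eqP sum /eqP ddc nup bp].
have jm : (j < m)%N.
  rewrite ltnNge; apply/negP => h; move: ddc; rewrite /dd /= nth_decs0 // => e.
  by rewrite -e in c0.
pose j0 := Ordinal jm.
have dj : val (d j0) = c by rewrite -ddc /dd /= (nth_decs _ jm).
have sumo : (\sum_(x | x != j0) val (d x) = N - c)%N.
  by move: sum; rewrite (bigD1 j0) //= dj => e; lia.
have bnd : forall x, x != j0 -> (val (d x) <= N - c)%N.
  by move=> x hx; rewrite -sumo (bigD1 x hx) /= leq_addr.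
have eqj : forall x : 'I_m, (val x == j) = (x == j0).
  by move=> x; apply/eqP/eqP => [h|->] //; apply: val_inj.
have phiE : forall x, val (phi j N' c' d x) = if x == j0 then c' else val (d x).
  move=> x; rewrite /phi ffunE eqj /=; case: ifP => hx; rewrite inordK //.
  apply: leq_ltn_trans (bnd x (negbT hx)) _; lia.
split.
- apply/and5P; split => //.
  + by apply/forallP => x; rewrite phiE; case: ifP.
  + rewrite (bigD1 j0) //= phiE eqxx.
    under eq_bigr => x hx do rewrite phiE (negbTE hx).
    by rewrite sumo; apply/eqP; lia.
  + by rewrite /dd /= (nth_decs _ jm) phiE eqxx.
- apply/ffunP => x; apply: val_inj; rewrite {1}/phi ffunE (eqj x) /=.
  case: ifP => hx; rewrite inordK ?phiE ?hx.
  + by move/eqP: hx => ->; rewrite -dj.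
  + by rewrite ltnS.
  + by [].
  + exact: ltn_ord.
- move=> idx hidx; case: (ltnP idx m) => h.
    rewrite !(nth_decs _ h) phiE; case: eqP => // /(congr1 val) /= e.
    by rewrite e eqxx in hidx.
  by rewrite !nth_decs0.
- have : (\sum_(x | x != j0) 1 <= \sum_(x | x != j0) val (d x))%N.
    by apply: leq_sum => x _; exact: pos.
  rewrite sum1_card cardC1 card_ord sumo; lia.
Qed.

Definition Gf (R : comAlgType rat) (s : int) (a : nat -> nat -> R) (j n N c m : nat) : R :=
  (\sum_(p : {perm 'I_(m.*2)} | rcd p)
     \sum_(d : {ffun 'I_m -> 'I_N.+1} | Pd j n c p d)
       (omega s p (decs d) *: ahat a p (decs d)))%R.

Theorem mainTheorem7 (A : comAlgType rat) (s : int) (a : nat -> nat -> A)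
  (i j n k : nat) :
  (1 <= k)%N -> Ssum s a (i + 1) j n 1 = Ssum s a (i + k) j n k.
Proof.
move=> k1.
have E : forall N c, Ssum s a N j n c = (\sum_(0 <= m < N.+1) Gf s a j n N c m)%R.
  by move=> N c; rewrite big_mkord.
have hle : ((i + 1).+1 <= (i + k).+1)%N by rewrite ltnS leq_add2l.
rewrite !E (big_cat_nat (leq0n (i + 1).+1) hle) /=.
rewrite [X in _ = (_ + X)%R]big_nat_cond [X in _ = (_ + X)%R]big1 ?addr0; last first.
  move=> m /andP [/andP [h1 _] _]; apply: big1 => p _; apply: big1 => d hd.
  have [_ _ _ hm] := @phi_key j n m (i + k) (i + 1) k 1 p d k1 isT
                      (leq_addl _ _) (leq_addl _ _) (addnAC _ _ _) hd.
  exfalso; move: h1 hm; lia.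
apply: eq_big_nat => m hm; apply: eq_bigr => p _.
apply: (@sum_bij _ _ _ _ _ (phi j (i + 1) 1) (phi j (i + k) k)).
- move=> x hx.
  have [h1 h2 _ _] := @phi_key j n m (i + 1) (i + k) 1 k p x isT k1
                      (leq_addl _ _) (leq_addl _ _) (addnAC _ _ _) hx.
  by split.
- move=> y hy.
  have [h1 h2 _ _] := @phi_key j n m (i + k) (i + 1) k 1 p y k1 isT
                      (leq_addl _ _) (leq_addl _ _) (addnAC _ _ _) hy.
  by split.
- move=> y hy.
  have [_ _ h3 _] := @phi_key j n m (i + k) (i + 1) k 1 p y k1 isT
                      (leq_addl _ _) (leq_addl _ _) (addnAC _ _ _) hy.
  move: hy => /and5P [_ _ _ _ /eqP hb].
  by case: (term_indep s a hb h3) => -> ->.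
Qed.
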